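(* Let $R:\widehat{\mathbb{C}}\rightarrow\widehat{\mathbb{C}}$ be a rational map of degree $n$ and let $\iota(z)=1/z$. Then the following are equivalent: \begin{enumerate} \item $R(1)=1$ and $\iota\circ R\circ\iota^{-1}(z)=R(z)$; \item $R(z)=\prod_{i=1}^n \dfrac{z-r_i}{1-r_i z}$ for some $r_1,\dots,r_n\in\mathbb{C}$; \item $R(z)=\dfrac{a_n+a_{n-1}z+\dots+a_1 z^{n-1}+a_0 z^n}{a_0+a_1 z+\dots+a_{n-1}z^{n-1}+a_n z^n}$ for some $a_0,\dots,a_n\in\mathbb{C}$. \end{enumerate}
   Context: $\widehat{\mathbb{C}}$ denotes the Riemann sphere; the degree of a rational map is the maximum of the degrees of numerator and denominator in lowest terms.
   Formalization: In (2) each rᵢ ranges over the Riemann sphere $\widehat{\mathbb{C}}$ rather than ℂ, with the factor (z − rᵢ)/(1 − rᵢz) taken as 1/z when rᵢ = ∞. The statement above fails without it. *)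

(* Defs.v *)
(* C := R[i] (complex numbers over a real field R : realType;
   for R the real numbers this is the field of complex numbers). *)
From HB Require Import structures.
From mathcomp Require Import all_boot all_order all_algebra.
From mathcomp Require Import complex.
From mathcomp Require Import reals.
Set Implicit Arguments. Unset Strict Implicit. Unset Printing Implicit Defensive.
Import Order.TTheory GRing.Theory Num.Theory.
Local Open Scope ring_scope.

Notation "x %:F" := (@FracField.tofrac _ x) : ring_scope.

(* The Riemann sphere: Some z = the finite point z, None = infinity. *)
Definition sphere (C : Type) := option C.

Section Sphere.
Variable C : fieldType.

(* iota(z) = 1/z on the Riemann sphere (an involution, so iota^{-1} = iota). *)
Definition sphere_inv (z : sphere C) : sphere C :=
  match z with
  | None => Some 0
  | Some w => if w == 0 then None else Some w^-1
  end.

(* degree of the rational map p/q (p, q in lowest terms) *)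
Definition ratdeg (p q : {poly C}) : nat := (maxn (size p) (size q)).-1.

(* The map of the Riemann sphere induced by the rational function p/q,
   with p, q coprime (lowest terms).  At infinity the value is the ratio of
   the coefficients of degree d = ratdeg p q. *)
Definition ratmap (p q : {poly C}) (z : sphere C) : sphere C :=
  match z with
  | Some w => if q.[w] == 0 then None else Some (p.[w] / q.[w])
  | None => let d := ratdeg p q in
            if q`_d == 0 then None else Some (p`_d / q`_d)
  end.

(* The factor (z - r)/(1 - r z) as a rational function; for r = infinity
   (None) this is its limit 1/z. *)
Definition blaschke_factor (r : sphere C) : {fraction {poly C}} :=
  match r with
  | Some r => ('X - r%:P)%:F / (1 - r *: 'X)%:F
  | None => 1 / ('X : {poly C})%:F
  end.

End Sphere.

(* Main.v *)
Require Import Defs.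
From HB Require Import structures.
From mathcomp Require Import all_boot all_order all_algebra.
From mathcomp Require Import complex.
From mathcomp Require Import reals.
From mathcomp Require Import zify ring.
Import Order.TTheory GRing.Theory Num.Theory.
Set Implicit Arguments. Unset Strict Implicit.
Local Open Scope ring_scope.

Section Gen.
Variable C : numClosedFieldType.
Implicit Types (p q : {poly C}).

Definition qs n (q : {poly C}) : {poly C} := \sum_(i < n.+1) q`_(rev_ord i) *: 'X^i.

Lemma poly_eq_nz (f g : {poly C}) :
  (forall w, w != 0 -> f.[w] = g.[w]) -> f = g.
Proof.
move=> H; apply/eqP; rewrite -subr_eq0; apply/eqP.
pose rs := [seq (k.+1)%:R : C | k <- iota 0 (size (f - g))].
apply: (roots_geq_poly_eq0 (rs := rs)).
- apply/allP => x /mapP [k _ ->]; rewrite /root hornerD hornerN H ?subrr //.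
  by rewrite pnatr_eq0.
- rewrite map_inj_uniq ?iota_uniq // => a b /eqP; rewrite eqr_nat => /eqP [].
  done.
- by rewrite size_map size_iota.
Qed.

Lemma horner_rev_sum n (a : 'I_n.+1 -> C) w : w != 0 ->
  (\sum_(i < n.+1) a (rev_ord i) *: 'X^i).[w] =
  w ^+ n * (\sum_(i < n.+1) a i *: 'X^i).[w^-1].
Proof.
move=> w0; rewrite !horner_sum mulr_sumr.
rewrite [RHS](reindex_inj rev_ord_inj) /=.
apply: eq_bigr => i _; rewrite !hornerZ !hornerXn.
rewrite mulrCA; congr (_ * _).
have hi : (i <= n)%N by have := ltn_ord i; lia.
rewrite subSS [w ^+ n](_ : _ = w ^+ (n - i) * w ^+ i); last by rewrite -exprD subnK.
by rewrite exprVn mulrAC divff ?mul1r // expf_neq0.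
Qed.

Lemma sum_coef n q : (size q <= n.+1)%N -> \sum_(i < n.+1) q`_i *: 'X^i = q.
Proof.
move=> hs; rewrite -poly_def; apply/polyP => j; rewrite coef_poly.
by case: ifP => // /negbT; rewrite -leqNgt => hj; rewrite nth_default // (leq_trans hs hj).
Qed.

Lemma qs_poly n q : qs n q = \poly_(i < n.+1) q`_(n - i).
Proof. by rewrite poly_def; apply: eq_bigr => i _ /=; rewrite subSS. Qed.

Lemma size_qs n q : (size (qs n q) <= n.+1)%N.
Proof. by rewrite qs_poly size_poly. Qed.

Lemma coef_qs n q j : (qs n q)`_j = if (j < n.+1)%N then q`_(n - j) else 0.
Proof. by rewrite qs_poly coef_poly. Qed.

Lemma horner_qs n q w : w != 0 -> (size q <= n.+1)%N ->
  (qs n q).[w] = w ^+ n * q.[w^-1].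
Proof.
move=> w0 hs; rewrite /qs (@horner_rev_sum n (fun i : 'I_n.+1 => q`_i) w w0).
by rewrite sum_coef.
Qed.

Lemma qsK n q : (size q <= n.+1)%N -> qs n (qs n q) = q.
Proof.
move=> hs; apply: poly_eq_nz => w w0.
rewrite horner_qs ?size_qs // horner_qs ?invr_eq0 // invrK.
by rewrite mulrA -exprMn mulfV // expr1n mul1r.
Qed.

Lemma qs0 n : qs n 0 = 0.
Proof. by rewrite /qs big1 // => i _; rewrite coef0 scale0r. Qed.

Lemma qs_eq0 n q : (size q <= n.+1)%N -> (qs n q == 0) = (q == 0).
Proof.
move=> hs; apply/eqP/eqP => [h|->]; last exact: qs0.
by rewrite -(@qsK n q hs) h qs0.
Qed.

Lemma qsZ n c q : qs n (c *: q) = c *: qs n q.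
Proof.
by rewrite /qs scaler_sumr; apply: eq_bigr => i _; rewrite coefZ scalerA.
Qed.

Lemma qs_mul n m (D E : {poly C}) : (size D <= n.+1)%N -> (size E <= m.+1)%N ->
  qs (n + m) (D * E) = qs n D * qs m E.
Proof.
move=> hD hE; apply: poly_eq_nz => w w0.
have hDE : (size (D * E)%R <= (n + m).+1)%N.
  apply: leq_trans (size_polyMleq _ _) _; lia.
by rewrite hornerM !horner_qs // hornerM exprD; ring.
Qed.

Lemma qs_at1 n q : (size q <= n.+1)%N -> (qs n q).[1] = q.[1].
Proof. by move=> hs; rewrite horner_qs ?oner_eq0 // expr1n mul1r invr1. Qed.

End Gen.

Section Blas.
Variable C : numClosedFieldType.

Definition den (x : sphere C) : {poly C} :=
  match x with Some r => 1 - r *: 'X | None => 'X end.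

Lemma den_neq0 (x : sphere C) : den x != 0.
Proof.
case: x => [r|] /=; last by rewrite polyX_eq0.
apply/eqP => /(congr1 (fun p : {poly C} => p`_0)).
by rewrite coefB coef1 coefZ coefX /= mulr0 subr0 coef0 => /eqP; rewrite oner_eq0.
Qed.

Lemma size_den (x : sphere C) : (size (den x) <= 2)%N.
Proof.
case: x => [r|] /=; last by rewrite size_polyX.
apply: leq_trans (size_polyD _ _) _; rewrite size_polyN size_poly1.
by rewrite geq_max /= (leq_trans (size_scale_leq _ _)) // size_polyX.
Qed.

Lemma blaschke_den (x : sphere C) : blaschke_factor x = (qs 1 (den x))%:F / (den x)%:F.
Proof.
case: x => [r|] /=.
  congr (_%:F / _); apply: poly_eq_nz => w w0.
  rewrite horner_qs // ?size_den //=.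
  rewrite !(hornerE) expr1.
  by rewrite mulrBr mulr1 mulrCA mulfV // mulr1.
  exact: (size_den (Some r)).
have e : qs 1 'X = 1 :> {poly C}.
  apply: poly_eq_nz => w w0.
  by rewrite horner_qs // ?size_polyX // hornerX hornerC expr1 mulfV.
transitivity ((1 : {poly C})%:F / ('X : {poly C})%:F); first by rewrite tofrac1.
by rewrite e.
Qed.

Lemma prod_blaschke n (r : 'I_n -> sphere C) :
  \prod_(i < n) den (r i) != 0 /\ (size (\prod_(i < n) den (r i))%R <= n.+1)%N /\
  \prod_(i < n) blaschke_factor (r i) =
    (qs n (\prod_(i < n) den (r i)))%:F / (\prod_(i < n) den (r i))%:F.
Proof.
elim: n r => [|n IH] r.
  rewrite !big_ord0 oner_eq0 size_poly1; split => //; split => //.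
  have -> : qs 0 (1 : {poly C}) = 1.
    by apply: poly_eq_nz => w w0; rewrite horner_qs ?size_poly1 // !hornerC mul1r.
  by rewrite tofrac1 divr1.
have [h1 [h2 h3]] := IH (fun i => r (lift ord0 i)).
rewrite !big_ord_recl; split; first by rewrite mulf_neq0 // den_neq0.
split.
  apply: leq_trans (size_polyMleq _ _) _.
  have := size_den (r ord0); lia.
rewrite h3 blaschke_den mulf_div -!tofracM.
by rewrite -(@qs_mul _ 1 n) // size_den.
Qed.

Lemma factor n (q : {poly C}) : q != 0 -> (size q <= n.+1)%N ->
  exists r : 'I_n -> sphere C, exists c, c != 0 /\ q = c *: \prod_(i < n) den (r i).
Proof.
elim: n q => [|n IH] q q0 hs.
  exists (fun _ => None), q`_0; rewrite big_ord0 alg_polyC -size1_polyC //.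
  split => //; apply: contraNneq q0 => e.
  by rewrite (size1_polyC hs) e.
pose ext (a : sphere C) (r : 'I_n -> sphere C) : 'I_n.+1 -> sphere C :=
  fun i => if unlift ord0 i is Some j then r j else a.
have extE a r : \prod_(i < n.+1) den (ext a r i) = den a * \prod_(i < n) den (r i).
  by rewrite big_ord_recl /ext unlift_none; congr (_ * _); apply: eq_bigr => i _; rewrite liftK.
case: (leqP (size q) n.+1) => hq.
  have [r [c [c0 e]]] := IH q q0 hq.
  exists (ext (Some 0) r), c; rewrite extE /= scale0r subr0 mul1r; by split.
have : size q != 1%N by apply: contraTneq hq => ->.
move=> /closed_rootP [x rx].
have [q' e] := factor_theorem _ _ rx.
have q'0 : q' != 0 by apply: contraNneq q0 => h; rewrite e h mul0r.
have hq' : (size q' <= n.+1)%N.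
  by move: hs; rewrite e size_mul ?polyXsubC_eq0 // size_XsubC addn2 /= ltnS.
have [r [c [c0 e']]] := IH q' q'0 hq'.
case: (eqVneq x 0) => [x0|x0].
  exists (ext None r), c; split => //.
  by rewrite extE e e' x0 subr0 /= -scalerAl mulrC.
exists (ext (Some x^-1) r), (c * - x); split; first by rewrite mulf_neq0 // oppr_eq0.
rewrite extE e e' /= -scalerAl -scalerA; congr (c *: _).
rewrite mulrC scalerAl; congr (_ * _).
rewrite scalerBr scalerA mulNr mulfV // scaleN1r opprK alg_polyC polyCN addrC.
done.
Qed.

End Blas.

Section Main.
Variable C : numClosedFieldType.
Implicit Types p q : {poly C}.

Lemma sizes p q n : ratdeg p q = n -> (size p <= n.+1)%N /\ (size q <= n.+1)%N.
Proof. rewrite /ratdeg; move: (size p) (size q) => a b; lia. Qed.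

Lemma sizes_eq p q n : ratdeg p q = n -> q != 0 ->
  size p = n.+1 \/ size q = n.+1.
Proof.
rewrite /ratdeg -size_poly_gt0; move: (size p) (size q) => a b; lia.
Qed.

Lemma invK (z : sphere C) : sphere_inv (sphere_inv z) = z.
Proof.
case: z => [w|] /=; last by rewrite eqxx.
case: eqP => [->|/eqP w0] //=.
by rewrite invr_eq0 (negbTE w0) invrK.
Qed.

Lemma L1 p q n : coprimep p q -> ratdeg p q = n ->
  ratmap p q (Some 1) = Some 1 ->
  (forall z, sphere_inv (ratmap p q (sphere_inv z)) = ratmap p q z) ->
  p = qs n q /\ q != 0.
Proof.
move=> cop hd h1 hinv.
have [hp hq] := sizes hd.
move: h1 => /=; case: eqP => // q1 [e1].
have q0 : q != 0 by apply/eqP => q0; apply: q1; rewrite q0 horner0.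
have pq1 : p.[1] = q.[1].
  by move: e1 => /(congr1 (fun t => t * q.[1])); rewrite divfK ?mul1r //; apply/eqP.
have p0 : p != 0 by apply/eqP => p0; apply: q1; rewrite -pq1 p0 horner0.
have key : p * qs n p = q * qs n q.
  apply: poly_eq_nz => w w0; rewrite !hornerM !horner_qs //.
  suff h : p.[w] * p.[w^-1] = q.[w] * q.[w^-1] by rewrite mulrCA h mulrCA.
  have := hinv (Some w); rewrite /= (negbTE w0) /=.
  case: (eqVneq q.[w^-1] 0) => hqi /=.
    case: eqP => // hqw [h].
    move/esym/eqP: h; rewrite mulf_eq0 invr_eq0 (introF eqP hqw) orbF => /eqP ->.
    by rewrite hqi mulr0 mul0r.
  case: (eqVneq p.[w^-1] 0) => hpi.
    rewrite hpi mul0r /= eqxx; case: eqP => // hqw _.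
    by rewrite hqw mulr0 mul0r.
  rewrite /= mulf_eq0 invr_eq0 (negbTE hpi) (negbTE hqi) /=.
  case: eqP => // hqw [h].
  move: h; rewrite invf_div => /eqP; rewrite eqr_div //; last exact/eqP.
  by move=> /eqP h; rewrite -h mulrC.
have dv : p %| qs n q by rewrite -(Gauss_dvdpr (qs n q) cop) -key dvdp_mulIl.
have [u hu] := dvdpP _ _ dv.
have hu2 : qs n p = q * u.
  by apply: (mulfI p0); rewrite key hu [RHS]mulrC -mulrA.
have u0 : u != 0.
  by apply/eqP => u0; move: hu; rewrite u0 mul0r => /eqP; rewrite qs_eq0 // (negbTE q0).
have su : (size u <= 1)%N.
  case: (sizes_eq hd q0) => hm.
    by have := size_qs n q; rewrite hu size_mul // hm; move: (size u) => k; lia.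
  have qsp0 : qs n p != 0 by rewrite qs_eq0.
  by have := size_qs n p; rewrite hu2 size_mul // hm; move: (size u) => k; lia.
rewrite (size1_polyC su) in hu.
have c1 : u`_0 = 1.
  have := congr1 (fun f => f.[1]) hu; rewrite /= qs_at1 // hornerM hornerC.
  by move=> h; apply: (mulIf (introN eqP q1)); rewrite mul1r {2}h pq1.
by rewrite hu c1 mul1r.
Qed.

Lemma P1 p q n : coprimep p q -> ratdeg p q = n -> p = qs n q -> q != 0 ->
  ratmap p q (Some 1) = Some 1 /\
  (forall z, sphere_inv (ratmap p q (sphere_inv z)) = ratmap p q z).
Proof.
move=> cop hd e q0.
have [hp hq] := sizes hd.
have qp : q = qs n p by rewrite e qsK.
have copqp : coprimep q p by rewrite coprimep_sym.
have q1 : q.[1] != 0.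
  apply/eqP => h; have r1 : root p 1 by rewrite /root e qs_at1 // h.
  by have := coprimep_root cop r1; rewrite h eqxx.
split; first by rewrite /= (negbTE q1) e qs_at1 // divff.
have hz0 : sphere_inv (ratmap p q None) = ratmap p q (Some 0).
  have c1 : q`_(ratdeg p q) = p.[0] by rewrite hd horner_coef0 e coef_qs subn0.
  have c2 : p`_(ratdeg p q) = q.[0] by rewrite hd horner_coef0 e coef_qs ltnSn subnn.
  rewrite /= c1 c2.
  case: (eqVneq p.[0] 0) => hp0 /=.
    have : q.[0] != 0 by apply: (coprimep_root cop); apply/eqP.
    by move/negbTE => ->; rewrite hp0 mul0r.
  case: (eqVneq q.[0] 0) => hq0 /=; first by rewrite hq0 mul0r eqxx.
  by rewrite mulf_eq0 invr_eq0 (negbTE hp0) (negbTE hq0) /= invf_div.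
case => [w|]; last first.
  have h := congr1 (@sphere_inv C) hz0; rewrite invK in h.
  by rewrite h.
case: (eqVneq w 0) => [->|w0].
  have -> : sphere_inv (Some (0 : C)) = None by rewrite /= eqxx.
  exact: hz0.
have -> : sphere_inv (Some w) = Some w^-1 by rewrite /= (negbTE w0).
have hpw : p.[w] = w ^+ n * q.[w^-1] by rewrite e horner_qs.
have hqw : q.[w] = w ^+ n * p.[w^-1] by rewrite {1}qp horner_qs.
have wn0 : w ^+ n != 0 by rewrite expf_neq0.
rewrite /= hpw hqw mulf_eq0 (negbTE wn0) /=.
case: (eqVneq q.[w^-1] 0) => hqi /=.
  have : p.[w^-1] != 0 by apply: (coprimep_root copqp); apply/eqP.
  by move/negbTE => ->; rewrite hqi mulr0 mul0r.
case: (eqVneq p.[w^-1] 0) => hpi /=; first by rewrite hpi mul0r eqxx.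
rewrite mulf_eq0 invr_eq0 (negbTE hpi) (negbTE hqi) /= invf_div.
by rewrite -mulf_div divff // mul1r.
Qed.

Lemma L3 p q n (a : 'I_n.+1 -> C) : coprimep p q -> ratdeg p q = n ->
  \sum_(i < n.+1) a i *: 'X^i != 0 ->
  p%:F / q%:F = (\sum_(i < n.+1) a (rev_ord i) *: 'X^i)%:F
              / (\sum_(i < n.+1) a i *: 'X^i)%:F ->
  p = qs n q /\ q != 0.
Proof.
move=> cop hd.
set A := \sum_(i < n.+1) a i *: 'X^i; set B := \sum_(i < n.+1) a (rev_ord i) *: 'X^i.
move=> A0 e.
have [hp hq] := sizes hd.
have sA : (size A <= n.+1)%N.
  have -> : A = \poly_(i < n.+1) a (inord i).
    by rewrite poly_def; apply: eq_bigr => i _; rewrite inord_val.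
  exact: size_poly.
have BA : B = qs n A.
  by apply: poly_eq_nz => w w0; rewrite horner_qs // /B horner_rev_sum.
have B0 : B != 0 by rewrite BA qs_eq0.
have q0 : q != 0.
  apply/eqP => q0; move: e; rewrite q0 tofrac0 invr0 mulr0 => /esym/eqP.
  by rewrite mulf_eq0 invr_eq0 !tofrac_eq0 (negbTE B0) (negbTE A0).
have e2 : p * A = B * q.
  by move: e => /eqP; rewrite eqr_div ?tofrac_eq0 // -!tofracM tofrac_eq => /eqP.
have copqp : coprimep q p by rewrite coprimep_sym.
have dv : q %| A by rewrite -(Gauss_dvdpr A copqp) e2 dvdp_mull.
have [v hv] := dvdpP _ _ dv.
have hv2 : B = p * v by apply: (mulIf q0); rewrite -e2 hv mulrA.
have v0 : v != 0 by apply: contraNneq A0 => v0; rewrite hv v0 mul0r.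
have sv : (size v <= 1)%N.
  case: (sizes_eq hd q0) => hm.
    have p0 : p != 0 by rewrite -size_poly_gt0 hm.
    by have := size_qs n A; rewrite -BA hv2 size_mul // hm; move: (size v) => k; lia.
  by move: sA; rewrite hv size_mul // hm; move: (size v) => k; lia.
rewrite (size1_polyC sv) in hv hv2.
have c0 : v`_0 != 0 by apply: contraNneq v0 => c0; rewrite (size1_polyC sv) c0.
split => //.
move: hv2; rewrite BA hv mul_polyC qsZ mulrC mul_polyC => /(congr1 (fun f => (v`_0)^-1 *: f)).
by rewrite !scalerA mulVf // !scale1r => ->.
Qed.

Lemma P2 p q n : ratdeg p q = n -> p = qs n q -> q != 0 ->
  exists r : 'I_n -> sphere C,
    p%:F / q%:F = \prod_(i < n) blaschke_factor (r i).
Proof.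
move=> hd e q0; have [hp hq] := sizes hd.
have [r [c [c0 qc]]] := factor q0 hq.
have [D0 [sD h3]] := prod_blaschke r.
exists r; rewrite h3 e qc qsZ -!mul_polyC !tofracM -mulf_div divff ?mul1r //.
by rewrite tofrac_eq0 polyC_eq0.
Qed.

Lemma P3 p q n : ratdeg p q = n -> p = qs n q -> q != 0 ->
  exists a : 'I_n.+1 -> C,
    (\sum_(i < n.+1) a i *: 'X^i != 0) /\
    (p%:F / q%:F = (\sum_(i < n.+1) a (rev_ord i) *: 'X^i)%:F
              / (\sum_(i < n.+1) a i *: 'X^i)%:F).
Proof.
move=> hd e q0; have [hp hq] := sizes hd.
exists (fun i => q`_i); rewrite sum_coef //; split => //.
by rewrite e.
Qed.

Lemma L23 n (r : 'I_n -> sphere C) (F : {fraction {poly C}}) :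
  F = \prod_(i < n) blaschke_factor (r i) ->
  exists a : 'I_n.+1 -> C,
    (\sum_(i < n.+1) a i *: 'X^i != 0) /\
    (F = (\sum_(i < n.+1) a (rev_ord i) *: 'X^i)%:F
              / (\sum_(i < n.+1) a i *: 'X^i)%:F).
Proof.
move=> ->; have [D0 [sD h3]] := prod_blaschke r.
exists (fun i => (\prod_(i < n) den (r i))`_i); rewrite sum_coef //; split => //.
Qed.

End Main.

Unset Implicit Arguments.
Local Open Scope complex_scope.

Theorem theorem2p7 (R : realType) (n : nat) (p q : {poly R[i]})
  (Hcop : coprimep p q) (Hdeg : ratdeg p q = n) :
  [<-> (* (1) R(1) = 1 and iota o R o iota^{-1} = R on the Riemann sphere *)
       ratmap p q (Some 1) = Some 1 /\
       (forall z : sphere R[i], sphere_inv (ratmap p q (sphere_inv z)) = ratmap p q z);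
       (* (2) R(z) = prod_{i=1}^n (z - r_i)/(1 - r_i z) *)
       exists r : 'I_n -> sphere R[i],
         (p%:F / q%:F = \prod_(i < n) blaschke_factor (r i))%R;
       (* (3) R(z) = (a_n + ... + a_0 z^n)/(a_0 + ... + a_n z^n) *)
       exists a : 'I_n.+1 -> R[i],
         (\sum_(i < n.+1) a i *: 'X^i != 0) /\
         (p%:F / q%:F =
            (\sum_(i < n.+1) a (rev_ord i) *: 'X^i)%:F
              / (\sum_(i < n.+1) a i *: 'X^i)%:F)%R].
Proof.
tfae.
- case=> h1 h2; have [e q0] := L1 Hcop Hdeg h1 h2.
  exact: P2 Hdeg e q0.
- case=> r e; exact: L23 e.
- case=> a [A0 e]; have [e' q0] := L3 Hcop Hdeg A0 e.
  exact: P1 Hcop Hdeg e' q0.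
Qed.
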